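(* Let $\lambda$ be a partition, $n\ge\ell(\lambda)$, and $M\in\mathrm{MLQ}(\lambda,n)$. Then $\operatorname{maj}_G(M)=\operatorname{maj}(M)$.
   Context: For a partition $\lambda$ with conjugate $\lambda'$ and $L=\lambda_1$, $\mathrm{MLQ}(\lambda,n)$ is the set of tuples $M=(B_1,\dots,B_L)$ of subsets of $[n]$ with $|B_j|=\lambda'_j$, drawn with rows $1..L$ bottom to top, columns $1..n$ left to right; cells $(r,j)$ with $j\in B_r$ are particles (balls), the others anti-particles. Major index $\operatorname{maj}$: for $r=L,\dots,2$, unlabelled balls of row $r$ get label $r$; balls of row $r$ in decreasing label order (left to right among ties) are each paired with the first unlabelled ball of row $r-1$ weakly to the right cyclically modulo $n$, which gets the same label; the pairing wraps if the lower ball is strictly left of the upper one. $\operatorname{maj}(M)=\sum(\ell(p)-r(p)+1)$ over wrapping pairings, $r(p)$ the row of the upper ball and $\ell(p)$ its label. Generalized major index $\operatorname{maj}_G$: label all cells. Row $L$: particles $L$, anti-particles $L-1$. For $r=L-1,\dots,1$: with $w_1,\dots,w_n$ the labels of row $r+1$, order columns $i_1,\dots,i_n$ with $w_{i_1}\ge\cdots\ge w_{i_n}$, ties by increasing column; $s=|B_r|$. Particle phase: for $k=1,\dots,s$, cell $(r+1,i_k)$ is paired with the first unlabelled particle of row $r$ weakly right of column $i_k$ cyclically, which gets label $w_{i_k}$; wrapping if its column is $<i_k$. Anti-particle phase: for $k=n,\dots,s+1$, cell $(r+1,i_k)$ is paired with the first unlabelled anti-particle of row $r$ weakly left of column $i_k$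 cyclically, which gets label $w_{i_k}-1$; wrapping if its column is $>i_k$. $\operatorname{maj}_G(M)=\sum_p(\ell(p)-r(p)+1)-\sum_{p'}(\ell(p')-r(p')+1)$, $p$ over wrapping particle-phase pairings, $p'$ over wrapping anti-particle-phase pairings, $r(\cdot)$ the row and $\ell(\cdot)$ the label of the upper cell. *)

(* Defs.v *)
From mathcomp Require Import all_boot all_order all_algebra.
Set Implicit Arguments. Unset Strict Implicit. Unset Printing Implicit Defensive.
Import GRing.Theory Num.Theory.
Local Open Scope ring_scope.

Definition is_partition (la : seq nat) : bool :=
  sorted geq la && all (fun p => 0 < p)%N la.

Definition plength (la : seq nat) : nat := size la.
Definition pfirst (la : seq nat) : nat := head 0%N la.
Definition conj_part (la : seq nat) (j : nat) : nat := count (fun p => j <= p)%N la.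

(* Rows are 1-based: row M r is B_r. Columns 'I_n are 0-based here
   (column c of the paper is ordinal c-1); this is only a relabelling. *)
Definition row (n : nat) (M : seq {set 'I_n}) (r : nat) : {set 'I_n} :=
  nth set0 M r.-1.

Definition MLQ (la : seq nat) (n : nat) (M : seq {set 'I_n}) : Prop :=
  size M = pfirst la /\
  forall j : nat, (1 <= j <= pfirst la)%N -> #|row M j| = conj_part la j.

Definition cols (n : nat) (B : {set 'I_n}) : seq nat := [seq val x | x <- enum B].

Definition cyc_order (n i : nat) (right : bool) : seq nat :=
  [seq (if right then (i + k) %% n else (i + (n - k)) %% n)%N | k <- iota 0 n].

Definition lab_of (asg : seq (nat * int)) (j : nat) (dflt : int) : int :=
  if j \in map fst asg then nth 0 (map snd asg) (index j (map fst asg)) else dflt.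

(* One pairing: the upper cell in column i, carrying the label [lab] to be
   given to the lower cell, with contribution [c] if the pairing wraps, is
   paired with the first (cyclically, weakly right if [right], weakly left
   otherwise) column j of the lower row that satisfies [avail] and is not yet
   labelled.  State: (assignments of the lower row, accumulated wrap sum). *)
Definition pair_one (n : nat) (right : bool) (avail : pred nat)
    (st : seq (nat * int) * int) (x : nat * int * int) : seq (nat * int) * int :=
  let: (asg, acc) := st in
  let: (i, lab, c) := x in
  match [seq j <- cyc_order n i right | avail j && (j \notin map fst asg)] with
  | [::] => st
  | j :: _ => ((j, lab) :: asg,
               if (if right then j < i else i < j)%N then acc + c else acc)
  end.

Definition pair_all (n : nat) (right : bool) (avail : pred nat)
    (xs : seq (nat * int * int)) : seq (nat * int) * int :=
  foldl (pair_one n right avail) ([::], 0) xs.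

Definition lab_order (a b : nat * int) : bool :=
  (b.2 < a.2) || ((a.2 == b.2) && (a.1 <= b.1)%N).

(* The algorithms are written on the particle columns of each row:
   [R r] is the (duplicate-free) list of particle columns of row r. *)

(* Processing row r (upper), given labels [asg] of balls of row r already
   labelled by pairings from row r+1. *)
Definition maj_step (n : nat) (R : nat -> seq nat)
    (st : seq (nat * int) * int) (r : nat) : seq (nat * int) * int :=
  let: (asg, acc) := st in
  let labelled := [seq (j, lab_of asg j r%:Z) | j <- R r] in
  let ordered := sort lab_order labelled in
  let: (asg', w) :=
    pair_all n true (fun j => j \in R r.-1)
             [seq (p.1, p.2, p.2 - r%:Z + 1) | p <- ordered] in
  (asg', acc + w).

(* rows r = L, L-1, ..., 2 *)
Definition maj_cols (L n : nat) (R : nat -> seq nat) : int :=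
  (foldl (maj_step n R) ([::], 0) [seq (L - k)%N | k <- iota 0 L.-1]).2.

Definition maj (n : nat) (la : seq nat) (M : seq {set 'I_n}) : int :=
  maj_cols (pfirst la) n (fun r => cols (row M r)).

(* state: (full labels of row r+1 as (column, label) for all columns, acc) *)
Definition majG_step (n : nat) (R : nat -> seq nat)
    (st : seq (nat * int) * int) (r : nat) : seq (nat * int) * int :=
  let: (w, acc) := st in
  let ordered := sort lab_order w in
  let s := size (R r) in
  let: (asgP, accP) :=
    pair_all n true (fun j => j \in R r)
      [seq (p.1, p.2, p.2 - (r.+1)%:Z + 1) | p <- take s ordered] in
  let: (asgA, accA) :=
    pair_all n false (fun j => j \notin R r)
      [seq (p.1, p.2 - 1, p.2 - (r.+1)%:Z + 1) | p <- rev (drop s ordered)] in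
  (asgP ++ asgA, acc + accP - accA).

(* row L labelled directly; then rows r = L-1, ..., 1 *)
Definition majG_cols (L n : nat) (R : nat -> seq nat) : int :=
  let top := [seq (j, if j \in R L then L%:Z else L%:Z - 1) | j <- iota 0 n] in
  (foldl (majG_step n R) (top, 0) [seq (L.-1 - k)%N | k <- iota 0 L.-1]).2.

Definition majG (n : nat) (la : seq nat) (M : seq {set 'I_n}) : int :=
  majG_cols (pfirst la) n (fun r => cols (row M r)).

(* Main.v *)
Require Import Defs.
From mathcomp Require Import all_boot all_order all_algebra.
From mathcomp Require Import zify.
Import GRing.Theory Num.Theory.

Lemma cyc_lt n i right j : j \in cyc_order n i right -> j < n.
Proof.
case/mapP=> k; rewrite mem_iota add0n => /andP[_ kn] ->.
have n0 : 0 < n by lia.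
by case: right; rewrite ltn_pmod.
Qed.

Lemma cyc_all n i right d : i < n -> d < n -> d \in cyc_order n i right.
Proof.
move=> iN dN; apply/mapP; case: right.
  case: (leqP i d) => hid.
    exists (d - i); first by rewrite mem_iota; lia.
    by rewrite subnKC // modn_small.
  exists (n + d - i); first by rewrite mem_iota; lia.
  have -> : i + (n + d - i) = d + n by lia.
  by rewrite modnDr modn_small.
case: (leqP d i) => hid.
  exists (i - d); first by rewrite mem_iota; lia.
  have -> : i + (n - (i - d)) = d + n by lia.
  by rewrite modnDr modn_small.
exists (n + i - d); first by rewrite mem_iota; lia.
have -> : i + (n - (n + i - d)) = d by lia.
by rewrite modn_small.
Qed.

Lemma pair_one_step n right (avail : pred nat) (D : seq nat) asg acc x :
  uniq D -> all (fun j => j < n) D -> (forall j, j < n -> avail j = (j \in D)) ->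
  {subset map fst asg <= D} -> size asg < size D -> x.1.1 < n ->
  exists j acc1, pair_one n right avail (asg, acc) x = ((j, x.1.2) :: asg, acc1)
    /\ j \in D /\ j \notin map fst asg.
Proof.
move=> uD aD hav sub sz; case: x => [[i lab] c] /= iN.
have [d dD dK] : exists2 d, d \in D & d \notin map fst asg.
  apply/allPn/negP => /allP H.
  by have := uniq_leq_size uD H; rewrite size_map leqNgt sz.
have dN : d < n by move/allP: aD => /(_ d dD).
set F := [seq _ <- _ | _].
have dF : d \in F by rewrite mem_filter dK hav // dD cyc_all.
case E: F dF => [|j rest] //= _.
have : j \in F by rewrite E mem_head.
rewrite mem_filter => /andP[/andP[aj jK] jc].
have jN := @cyc_lt _ _ _ _ jc.
exists j; eexists; split; first by [].
by rewrite -hav.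
Qed.

Lemma pair_fold n right (avail : pred nat) (D : seq nat) xs :
  uniq D -> all (fun j => j < n) D -> (forall j, j < n -> avail j = (j \in D)) ->
  forall asg0 acc0, uniq (map fst asg0) -> {subset map fst asg0 <= D} ->
  all (fun x : nat * int * int => x.1.1 < n) xs -> size asg0 + size xs <= size D ->
  exists new, (foldl (pair_one n right avail) (asg0, acc0) xs).1 = new ++ asg0
    /\ size new = size xs /\ uniq (map fst (new ++ asg0))
    /\ {subset map fst new <= D} /\ {subset map snd new <= [seq x.1.2 | x <- xs]}.
Proof.
move=> uD aD hav; elim: xs => [|x xs IH] asg0 acc0 u0 s0 axs sz.
  by exists [::].
move/andP: axs => [xN axs].
have sz1 : size asg0 < size D.
  by move: sz => /=; move: (size asg0) (size xs) (size D) => a b d; lia.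
have [j [acc1 [E [jD jK]]]] := @pair_one_step n right avail D asg0 acc0 x uD aD hav s0 sz1 xN.
have fc : forall f (z : seq (nat * int) * int) y ys, foldl f z (y :: ys) = foldl f (f z y) ys by [].
rewrite fc E.
have u1 : uniq (map fst ((j, x.1.2) :: asg0)) by rewrite /= jK.
have s1 : {subset map fst ((j, x.1.2) :: asg0) <= D}.
  by move=> k /=; rewrite inE => /orP[/eqP->|/s0].
have sz2 : size ((j, x.1.2) :: asg0) + size xs <= size D.
  by move: sz => /=; move: (size asg0) (size xs) (size D) => a b d; lia.
have [new [E1 [E2 [E3 [E4 E5]]]]] := IH _ acc1 u1 s1 axs sz2.
exists (rcons new (j, x.1.2)); rewrite E1 cat_rcons size_rcons E2; split=> //.
split=> //; split=> //; split.
  by move=> k; rewrite map_rcons mem_rcons inE => /orP[/eqP->|/E4].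
move=> k; rewrite map_rcons mem_rcons inE /= => /orP[/eqP->|/E5]; first by rewrite mem_head.
by move=> H; rewrite inE H orbT.
Qed.

Lemma pair_zero0 n right (avail : pred nat) xs :
  all (fun x : nat * int * int => x.2 == 0%R) xs ->
  forall asg0 acc0, (foldl (pair_one n right avail) (asg0, acc0) xs).2 = acc0.
Proof.
elim: xs => [|[[i lab] c] xs IH] //= /andP[/eqP c0 axs] asg0 acc0.
rewrite /pair_one; case: [seq _ <- _ | _] => [|j rest]; first exact: IH.
by rewrite c0 GRing.addr0 if_same IH.
Qed.

Lemma lo_tr : transitive lab_order.
Proof. move=> [a1 a2] [b1 b2] [c1 c2]; rewrite /lab_order /=. lia. Qed.
Lemma lo_tot : total lab_order.
Proof. move=> [a1 a2] [b1 b2]; rewrite /lab_order /=. lia. Qed.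
Lemma lo_as : antisymmetric lab_order.
Proof.
move=> [a1 a2] [b1 b2]; rewrite /lab_order /= => H.
have [-> ->] : a1 = b1 /\ a2 = b2 by lia. by [].
Qed.

Lemma lab_of_mem (s : seq (nat * int)) e d :
  uniq (map fst s) -> e \in s -> lab_of s e.1 d = e.2.
Proof.
elim: s => [|x s IH] //= /andP[xK us]; rewrite inE => /orP[/eqP->|es].
  by rewrite /lab_of /= mem_head eqxx.
have ek : e.1 \in map fst s by apply/mapP; exists e.
have ne : (e.1 == x.1) = false.
  by apply/negbTE; apply/negP => /eqP E; move: xK; rewrite -E ek.
move: (IH us es); rewrite /lab_of /= inE ne /= ek.
by rewrite eq_sym ne.
Qed.

Lemma lab_of_nomem (s : seq (nat * int)) j d :
  j \notin map fst s -> lab_of s j d = d.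
Proof. by rewrite /lab_of => /negbTE->. Qed.

Lemma split_iota n (P : seq nat) : uniq P -> all (fun j => j < n) P ->
  perm_eq (iota 0 n) (P ++ [seq j <- iota 0 n | j \notin P]).
Proof.
move=> uP aP.
have E : perm_eq ([seq j <- iota 0 n | j \in P] ++ [seq j <- iota 0 n | j \notin P]) (iota 0 n).
  by apply/permPl; apply: (perm_filterC (mem P)).
rewrite perm_sym; apply: perm_trans E; apply: perm_cat => //.
apply: uniq_perm => //; first by rewrite filter_uniq // iota_uniq.
move=> j; rewrite mem_filter mem_iota /=.
case jP: (j \in P) => //=.
by move/allP: aP => /(_ j jP); lia.
Qed.

Lemma size_compl n (P : seq nat) : uniq P -> all (fun j => j < n) P ->
  size [seq j <- iota 0 n | j \notin P] = n - size P.
Proof.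
move=> uP aP; have := perm_size (@split_iota n P uP aP).
rewrite size_cat size_iota => E. by rewrite [in RHS]E addKn.
Qed.

Lemma map_pairs (s : seq (nat * int)) (f : nat -> int) :
  (forall e, e \in s -> e.2 = f e.1) -> s = [seq (j, f j) | j <- map fst s].
Proof.
move=> H; rewrite -map_comp -[LHS]map_id; apply/eq_in_map => -[a b] /H /= ->.
by [].
Qed.

Lemma uniq_perm_size (s t : seq nat) : uniq s -> uniq t -> {subset s <= t} ->
  size t <= size s -> perm_eq s t.
Proof.
move=> us ut st sz; have [_ E] := uniq_min_size us st sz.
exact: uniq_perm.
Qed.

Lemma ar1 r : (Posz r - Posz r.+1 + 1 = 0)%R.
Proof. lia. Qed.
Lemma ar2 a b c : a <= b -> b <= c -> c - a - (b - a) = c - b.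
Proof. lia. Qed.
Lemma ar3 r (x : int) : (Posz r.+1 <= x)%R -> (Posz r <= x)%R.
Proof. lia. Qed.

Definition Inv n (R : nat -> seq nat) r (w asg : seq (nat * int)) : Prop :=
  (exists cs, perm_eq cs (iota 0 n) /\
     w = [seq (j, if j \in R r then lab_of asg j (Posz r) else (Posz r - 1)%R) | j <- cs])
  /\ (forall j, j \in R r -> (Posz r <= lab_of asg j (Posz r))%R).

Lemma step_sim n R r w asg acc :
  (forall r, uniq (R r) && all (fun j => j < n) (R r)) ->
  size (R r.+1) <= size (R r) -> Inv n R r.+1 w asg ->
  (majG_step n R (w, acc) r).2 = (maj_step n R (asg, acc) r.+1).2 /\
  Inv n R r (majG_step n R (w, acc) r).1 (maj_step n R (asg, acc) r.+1).1.
Proof.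
move=> good hsz [[cs [pcs ->]] hlab].
have /andP[uP aP] := good r.+1; have /andP[uD aD] := good r.
set Pl := [seq (j, lab_of asg j (Posz r.+1)) | j <- R r.+1].
set Al := [seq (j, Posz r) | j <- [seq j <- iota 0 n | j \notin R r.+1]].
have AlE : forall p, p \in Al -> p.2 = Posz r /\ p.1 < n.
  move=> p /mapP[j]; rewrite mem_filter mem_iota => /andP[_ /andP[_ jn]] -> /=.
  split=> //; lia.
have PlE : forall p, p \in sort lab_order Pl -> (Posz r.+1 <= p.2)%R /\ p.1 < n.
  move=> p; rewrite mem_sort => /mapP[j jP] -> /=; split; first exact: hlab.
  by move/allP: aP => /(_ j jP).
have Hsort : sort lab_order [seq (j, if j \in R r.+1 then lab_of asg j (Posz r.+1) else (Posz r.+1 - 1)%R) | j <- cs] = sort lab_order Pl ++ Al.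
  apply: (sorted_eq lo_tr lo_as); first exact: sort_sorted lo_tot _.
    rewrite (sorted_pairwise lo_tr) pairwise_cat -!(sorted_pairwise lo_tr).
    rewrite sort_sorted ?andbT; last exact: lo_tot.
    apply/andP; split.
      apply/allrelP => a b /PlE[la _] /AlE[lb _]; rewrite /lab_order lb.
      apply/orP; left; move: (a.2) la => x; lia.
    rewrite sorted_map; apply: (@sub_sorted _ leq).
      by move=> a b ab; rewrite /lab_order /= eqxx ab orbT.
    apply: sorted_filter; first exact: leq_trans.
    exact: iota_sorted.
  rewrite perm_sort.
  apply: (perm_trans (perm_map _ pcs)).
  set F := fun j => (j, if j \in R r.+1 then lab_of asg j (Posz r.+1) else (Posz r.+1 - 1)%R).
  have := perm_map F (@split_iota n _ uP aP); rewrite map_cat.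
  have -> : map F (R r.+1) = Pl by apply/eq_in_map => j /= jP; rewrite /F jP.
  have -> : map F [seq j <- iota 0 n | j \notin R r.+1] = Al.
    apply/eq_in_map => j; rewrite mem_filter => /andP[/negbTE jP _].
    rewrite /F jP; congr (_, _); lia.
  move=> H; apply: (perm_trans H); apply: perm_cat => //.
  by rewrite perm_sym perm_sort.
rewrite /majG_step /maj_step Hsort.
have hn : (size (R r) < size (sort lab_order Pl)) = false by rewrite size_sort size_map ltnNge hsz.
rewrite take_cat drop_cat hn /= -/Pl /pair_all map_cat foldl_cat.
rewrite size_sort size_map.
set k := size (R r) - size (R r.+1).
have sRn : size (R r) <= n.
  rewrite -[n](size_iota 0); apply: uniq_leq_size => // j jD.
  by rewrite mem_iota; move/allP: aD => /(_ j jD); lia.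
have sAl : size Al = n - size (R r.+1) by rewrite size_map size_compl.
have sP : size (sort lab_order Pl) = size (R r.+1) by rewrite size_sort size_map.
have hav1 : forall j, j < n -> (in_mem^~ (mem (R r))) j = (j \in R r) by [].
have [newM [M1 [M2 [M3 [M4 M5]]]]] := @pair_fold n true (in_mem^~ (mem (R r))) (R r)
   [seq (p.1, p.2, (p.2 - Posz r.+1 + 1)%R) | p <- sort lab_order Pl] uD aD hav1 [::] 0%R isT
   (ltac:(by move=> ?; rewrite in_nil))
   (ltac:(apply/allP => x /mapP[p pin ->] /=; exact: (PlE p pin).2))
   (ltac:(by rewrite size_map sP)).
case EM : (foldl _ ([::], 0%R) (map _ (sort lab_order Pl))) M1 => [asgM wM] /= M1.
rewrite cats0 in M1 M3; subst newM.
have sM : size asgM = size (R r.+1) by rewrite M2 size_map.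
have [newE [E1 [E2 [E3 [E4 E5]]]]] := @pair_fold n true (in_mem^~ (mem (R r))) (R r)
   [seq (p.1, p.2, (p.2 - Posz r.+1 + 1)%R) | p <- take k Al] uD aD hav1 asgM wM M3 M4
   (ltac:(apply/allP => x /mapP[p /mem_take pin ->] /=; exact: (AlE p pin).2))
   (ltac:(rewrite size_map size_takel; last (by rewrite sAl /k; exact: leq_sub2r _ sRn);
           apply: (@leq_trans (size (R r.+1) + k)); [by rewrite -sM | by rewrite /k subnKC])).
have Z1 := @pair_zero0 n true (in_mem^~ (mem (R r)))
   [seq (p.1, p.2, (p.2 - Posz r.+1 + 1)%R) | p <- take k Al]
   (ltac:(apply/allP => x /mapP[p /mem_take pin ->] /=; by rewrite (AlE p pin).1 ar1))
   asgM wM.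
case EP : (foldl _ (asgM, wM) _) E1 Z1 => [asgP accP] /= E1 Z1; subst asgP accP.
set D' := [seq j <- iota 0 n | j \notin R r].
have uD' : uniq D' by rewrite filter_uniq // iota_uniq.
have aD' : all (fun j => j < n) D'.
  by apply/allP => j; rewrite mem_filter mem_iota => /andP[_]; rewrite add0n.
have hav2 : forall j, j < n -> (fun j => j \notin R r) j = (j \in D').
  move=> j jn; rewrite mem_filter mem_iota /=; case: (j \notin R r) => //=; apply/esym; apply/idP; by rewrite add0n.
have sD' : size D' = n - size (R r) by rewrite size_compl.
have [newA [A1 [A2 [A3 [A4 A5]]]]] := @pair_fold n false (fun j => j \notin R r) D'
   [seq (p.1, (p.2 - 1)%R, (p.2 - Posz r.+1 + 1)%R) | p <- rev (drop k Al)] uD' aD' hav2 [::] 0%R isT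
   (ltac:(by move=> ?; rewrite in_nil))
   (ltac:(apply/allP => x /mapP[p]; rewrite mem_rev => /mem_drop pin -> /=; exact: (AlE p pin).2))
   (ltac:(by rewrite size_map size_rev size_drop sAl sD' /k /= add0n (@ar2 _ _ _ hsz sRn))).
have Z2 := @pair_zero0 n false (fun j => j \notin R r)
   [seq (p.1, (p.2 - 1)%R, (p.2 - Posz r.+1 + 1)%R) | p <- rev (drop k Al)]
   (ltac:(apply/allP => x /mapP[p]; rewrite mem_rev => /mem_drop pin -> /=; by rewrite (AlE p pin).1 ar1))
   [::] 0%R.
case EA : (foldl _ ([::], 0%R) _) A1 Z2 => [asgA accA] /= A1 Z2; subst asgA accA.
rewrite cats0 in A3 *.
split; first by rewrite GRing.subr0.
have sk : size (take k Al) = k by rewrite size_takel // sAl /k; exact: leq_sub2r _ sRn.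
have sE : size newE = k by rewrite E2 size_map.
have sA : size newA = size D'.
  by rewrite A2 size_map size_rev size_drop sAl sD' /k (@ar2 _ _ _ hsz sRn).
have HP : perm_eq (map fst (newE ++ asgM)) (R r).
  apply: uniq_perm_size => //.
    by move=> j; rewrite map_cat mem_cat => /orP[/E4|/M4].
  rewrite size_map size_cat sE; apply: leq_trans (_ : size (R r) <= k + size (R r.+1)) _; first by rewrite /k subnK.
  by rewrite leq_add2l -sM.
have HA : perm_eq (map fst newA) D'.
  by apply: uniq_perm_size => //; rewrite size_map sA.
split.
  exists (map fst ((newE ++ asgM) ++ newA)); split.
    rewrite map_cat; apply: perm_trans (perm_cat HP HA) _.
    by rewrite perm_sym; apply: split_iota.
  apply: map_pairs => e; rewrite !mem_cat => /orP[/orP[eE|eM]|eA].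
  - have e1 : e.1 \in R r by apply: E4; apply: map_f.
    have e1n : e.1 \notin map fst asgM.
      move: E3; rewrite map_cat cat_uniq => /and3P[_ /hasPn H _].
      by apply/negP => /H; rewrite map_f.
    rewrite e1 lab_of_nomem //.
    have := E5 e.2 (map_f _ eE); rewrite -map_comp => /mapP[p /mem_take pin ->] /=.
    exact: (AlE p pin).1.
  - have e1 : e.1 \in R r by apply: M4; apply: map_f.
    by rewrite e1 (lab_of_mem _ _ _ M3 eM).
  - have e1 : e.1 \in D' by apply: A4; apply: map_f.
    have -> : (e.1 \in R r) = false.
      by move: e1; rewrite mem_filter => /andP[/negbTE].
    have := A5 e.2 (map_f _ eA); rewrite -map_comp => /mapP[p].
    rewrite mem_rev => /mem_drop pin -> /=.
    by rewrite (AlE p pin).1.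
move=> j jD; case: (boolP (j \in map fst asgM)) => [/mapP[e eM ->]|jn].
  rewrite (lab_of_mem _ _ _ M3 eM).
  have := M5 e.2 (map_f _ eM); rewrite -map_comp => /mapP[p pin ->] /=.
  exact: (@ar3 _ _ (PlE p pin).1).
by rewrite lab_of_nomem.
Qed.

Lemma foldl_cons {T S : Type} (f : T -> S -> T) z x s : foldl f z (x :: s) = foldl f (f z x) s.
Proof. by []. Qed.

Definition rs m := [seq m - k | k <- iota 0 m].

Lemma rsS m : rs m.+1 = m.+1 :: rs m.
Proof.
rewrite /rs /= -[1]/(1 + 0) iotaDl -map_comp subn0; congr (_ :: _).
Qed.

Lemma fold_sim n R m : (forall r, uniq (R r) && all (fun j => j < n) (R r)) ->
  (forall r, 1 <= r <= m -> size (R r.+1) <= size (R r)) ->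
  forall w asg acc, Inv n R m.+1 w asg ->
  (foldl (majG_step n R) (w, acc) (rs m)).2 = (foldl (maj_step n R) (asg, acc) (map S (rs m))).2.
Proof.
move=> good; elim: m => [|m IH] hsz w asg acc hinv; first by [].
rewrite rsS map_cons !foldl_cons.
have hs : size (R m.+2) <= size (R m.+1) by apply: hsz; rewrite ltn0Sn leqnn.
have [E1 E2] := @step_sim n R m.+1 w asg acc good hs hinv.
move: E1 E2.
case: (majG_step n R (w, acc) m.+1) => w' a'.
case: (maj_step n R (asg, acc) m.+2) => asg' a'' /= -> hinv'.
apply: IH => // r /andP[r1 rm]; apply: hsz; rewrite r1 /=; exact: leqW.
Qed.

Theorem lemma4p30 (la : seq nat) (n : nat) (M : seq {set 'I_n}) :
  is_partition la -> (plength la <= n)%N -> MLQ la M ->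
  majG la M = maj la M.
Proof.
move=> _ _ [_ hM].
set R := fun r => cols (Defs.row M r).
have good : forall r, uniq (R r) && all (fun j => j < n) (R r).
  move=> r; apply/andP; split.
    by rewrite /R /cols map_inj_uniq ?enum_uniq //; exact: val_inj.
  by apply/allP => j /mapP[x _ ->]; exact: ltn_ord.
have szR : forall r, size (R r) = #|Defs.row M r| by move=> r; rewrite /R /cols size_map cardE.
have HL : forall r, 1 <= r -> r.+1 <= pfirst la -> size (R r.+1) <= size (R r).
  move=> r r1 rL; rewrite !szR !hM.
  - by apply: sub_count => p /=; exact: ltnW.
  - by rewrite r1 /= ltnW.
  - by rewrite /= rL.
rewrite /majG /maj -/R; move: HL; case: (pfirst la) => [|L] HL; first by [].
rewrite /majG_cols /maj_cols /=.
have -> : [seq L.+1 - k | k <- iota 0 L] = map S (rs L).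
  rewrite /rs -map_comp; apply/eq_in_map => k; rewrite mem_iota => /andP[_ kL] /=.
  lia.
rewrite -/(rs L); apply: (@fold_sim n R L good).
  move=> r /andP[r1 rL]; apply: HL => //.
split.
  exists (iota 0 n); split => //.
by move=> j _; rewrite /lab_of /=.
Qed.
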